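(* Let $f$ be a homeomorphism of a compact metric space $(X,d)$ with the shadowing property such that for every $\epsilon>0$ there is $\delta>0$ with: $d(x,y)<\delta$ implies $V^s_\epsilon(x)\cap V^u_\epsilon(y)\ne\emptyset$. Then $f$ has the limit shadowing property.
   Context: Shadowing: for every $\varepsilon>0$ there is $\delta>0$ such that for every sequence $(x_k)_{k\in\mathbb{Z}}$ with $d(f(x_k),x_{k+1})<\delta$ for all $k$ there is $y$ with $d(f^k(y),x_k)<\varepsilon$ for all $k\in\mathbb{Z}$. $W^s_\epsilon(x)=\{y: d(f^n(x),f^n(y))\le\epsilon\ \forall n\ge0\}$, $W^u_\epsilon(x)=\{y: d(f^{-n}(x),f^{-n}(y))\le\epsilon\ \forall n\ge0\}$, $W^s(x)=\{y: d(f^n(x),f^n(y))\to0\ (n\to+\infty)\}$, $W^u(x)=\{y: d(f^{-n}(x),f^{-n}(y))\to0\ (n\to+\infty)\}$, $V^s_\epsilon(x)=W^s(x)\cap W^s_\epsilon(x)$, $V^u_\epsilon(x)=W^u(x)\cap W^u_\epsilon(x)$. $f$ has the limit shadowing property if for every sequence $(x_k)_{k\in\mathbb{N}}$ with $d(f(x_k),x_{k+1})\to0$ as $k\to\infty$ there is $y\in X$ with $d(f^k(y),x_k)\to0$ as $k\to\infty$. *)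

(* Defs.v *)
From Stdlib Require Import Reals Lra ZArith List.
Open Scope R_scope.

Section Dyn.
Context {X : Type} (d : X -> X -> R).

Definition is_metric : Prop :=
  (forall x y, 0 <= d x y) /\
  (forall x y, d x y = 0 <-> x = y) /\
  (forall x y, d x y = d y x) /\
  (forall x y z, d x z <= d x y + d y z).

Definition open_set (U : X -> Prop) : Prop :=
  forall x, U x -> exists r, 0 < r /\ forall y, d x y < r -> U y.

Definition compact_space : Prop :=
  forall (I : Type) (U : I -> X -> Prop),
    (forall i, open_set (U i)) ->
    (forall x, exists i, U i x) ->
    exists l : list I, forall x, exists i, In i l /\ U i x.

Definition continuous_map (h : X -> X) : Prop :=
  forall x eps, 0 < eps -> exists delta, 0 < delta /\
    forall y, d x y < delta -> d (h x) (h y) < eps.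

Definition homeomorphism (f g : X -> X) : Prop :=
  (forall x, g (f x) = x) /\ (forall x, f (g x) = x) /\
  continuous_map f /\ continuous_map g.

Definition fpow (f g : X -> X) (k : Z) (x : X) : X :=
  match k with
  | Z0 => x
  | Zpos p => Nat.iter (Pos.to_nat p) f x
  | Zneg p => Nat.iter (Pos.to_nat p) g x
  end.

Definition shadowing (f g : X -> X) : Prop :=
  forall eps, 0 < eps -> exists delta, 0 < delta /\
    forall xs : Z -> X,
      (forall k, d (f (xs k)) (xs (k + 1)%Z) < delta) ->
      exists y, forall k, d (fpow f g k y) (xs k) < eps.

Definition Ws_eps (f : X -> X) (eps : R) (x : X) : X -> Prop :=
  fun y => forall n : nat, d (Nat.iter n f x) (Nat.iter n f y) <= eps.
Definition Wu_eps (g : X -> X) (eps : R) (x : X) : X -> Prop :=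
  fun y => forall n : nat, d (Nat.iter n g x) (Nat.iter n g y) <= eps.
Definition Ws (f : X -> X) (x : X) : X -> Prop :=
  fun y => Un_cv (fun n => d (Nat.iter n f x) (Nat.iter n f y)) 0.
Definition Wu (g : X -> X) (x : X) : X -> Prop :=
  fun y => Un_cv (fun n => d (Nat.iter n g x) (Nat.iter n g y)) 0.
Definition Vs_eps (f : X -> X) (eps : R) (x : X) : X -> Prop :=
  fun y => Ws f x y /\ Ws_eps f eps x y.
Definition Vu_eps (g : X -> X) (eps : R) (x : X) : X -> Prop :=
  fun y => Wu g x y /\ Wu_eps g eps x y.

Definition limit_shadowing (f : X -> X) : Prop :=
  forall xs : nat -> X,
    Un_cv (fun k => d (f (xs k)) (xs (S k))) 0 ->
    exists y, Un_cv (fun k => d (Nat.iter k f y) (xs k)) 0.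

End Dyn.

(* Main.v *)
Require Import Defs.
From Stdlib Require Import Reals ZArith List Lra Lia Classical ClassicalEpsilon.
Open Scope R_scope.

Lemma iter_add' {A} (h:A->A) m n x : Nat.iter (m + n) h x = Nat.iter m h (Nat.iter n h x).
Proof. induction m; simpl; [reflexivity| now rewrite IHm]. Qed.

Lemma iter_cancel {A} (h k : A -> A) (H : forall x, h (k x) = x) n x :
  Nat.iter n h (Nat.iter n k x) = x.
Proof.
  revert x; induction n as [|n IH]; intro x; [reflexivity|].
  rewrite (Nat.iter_succ_r n A k). simpl. rewrite IH. apply H.
Qed.

Lemma iter_le1 {A} (h k : A -> A) (H : forall x, h (k x) = x) n m x :
  (m <= n)%nat -> Nat.iter m h (Nat.iter n k x) = Nat.iter (n - m) k x.
Proof.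
  intro Hmn. assert (E : Nat.iter n k x = Nat.iter m k (Nat.iter (n - m) k x))
    by (rewrite <- iter_add'; f_equal; lia).
  rewrite E. apply iter_cancel; auto.
Qed.

Lemma iter_ge1 {A} (h k : A -> A) (H : forall x, h (k x) = x) n m x :
  (n <= m)%nat -> Nat.iter m h (Nat.iter n k x) = Nat.iter (m - n) h x.
Proof.
  intro Hmn. assert (E : Nat.iter m h (Nat.iter n k x) = Nat.iter (m - n) h (Nat.iter n h (Nat.iter n k x)))
    by (rewrite <- iter_add'; f_equal; lia).
  rewrite E. now rewrite iter_cancel.
Qed.

Lemma fpow_nat {X} (f g : X -> X) n x : fpow f g (Z.of_nat n) x = Nat.iter n f x.
Proof. destruct n; [reflexivity|]. simpl. now rewrite SuccNat2Pos.id_succ. Qed.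

Lemma iter_cont (X : Type) (d : X -> X -> R) (f : X -> X) (Hf : continuous_map d f) : forall k x eps, 0 < eps ->
  exists delta, 0 < delta /\ forall y, d x y < delta -> d (Nat.iter k f x) (Nat.iter k f y) < eps.
Proof.
  induction k as [|k IH]; intros x eps He.
  - exists eps; split; auto.
  - destruct (Hf (Nat.iter k f x) eps He) as (d1 & Hd1 & Hc).
    destruct (IH x d1 Hd1) as (d2 & Hd2 & Hc2).
    exists d2; split; auto. intros y Hy. simpl. apply Hc, Hc2, Hy.
Qed.

Lemma cluster (X : Type) (d : X -> X -> R) (Hm : is_metric d) (Hc : compact_space d) (z : nat -> X) :
  exists p, forall r, 0 < r -> forall N, exists m, (N <= m)%nat /\ d p (z m) < r.
Proof.
  destruct Hm as (Hpos & Hzero & Hsym & Htri).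
  apply NNPP; intro Hn.
  assert (Hall : forall p, exists r N, 0 < r /\ forall m, (N <= m)%nat -> r <= d p (z m)).
  { intro p. apply NNPP; intro Hp. apply Hn. exists p. intros r Hr N.
    apply NNPP; intro Hq. apply Hp. exists r, N. split; auto. intros m Hm.
    apply Rnot_lt_le. intro Hl. apply Hq. exists m; auto. }
  set (I := {t : X * R * nat | 0 < snd (fst t) /\
             forall m, (snd t <= m)%nat -> snd (fst t) <= d (fst (fst t)) (z m)}).
  set (U := fun (i : I) (y : X) => d (fst (fst (proj1_sig i))) y < snd (fst (proj1_sig i))).
  destruct (Hc I U) as [l Hl].
  - intros i x Hx. exists (snd (fst (proj1_sig i)) - d (fst (fst (proj1_sig i))) x).
    split; [unfold U in Hx; lra|]. intros y Hy. unfold U.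
    pose proof (Htri (fst (fst (proj1_sig i))) x y). lra.
  - intro x. destruct (Hall x) as (r & N & Hr & HN).
    exists (exist _ (x, r, N) (conj Hr HN)). unfold U; simpl.
    rewrite (proj2 (Hzero x x) eq_refl). exact Hr.
  - set (M := list_max (map (fun i : I => snd (proj1_sig i)) l)).
    destruct (Hl (z M)) as (i & Hi & Hu).
    destruct i as [[[x r] N] [Hr HN]]. unfold U in Hu; simpl in Hu.
    assert (HNM : (N <= M)%nat).
    { assert (Hf := proj1 (list_max_le (map (fun i : I => snd (proj1_sig i)) l) M) (le_n _)).
      rewrite Forall_forall in Hf.
      apply (Hf N). change N with ((fun i : I => snd (proj1_sig i)) (exist _ (x, r, N) (conj Hr HN))).
      apply in_map. exact Hi. }
    assert (HN2 := HN M HNM). simpl in HN2. lra.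
Qed.

Definition dc_step {T} (P : nat -> T -> Prop) (Rl : nat -> T -> T -> Prop)
  (Hs : forall j s, P j s -> exists s', P (S j) s' /\ Rl j s s') (j : nat) (s : {s | P j s}) :
  {s' | P (S j) s' /\ Rl j (proj1_sig s) s'} :=
  constructive_indefinite_description _ (Hs j _ (proj2_sig s)).

Fixpoint dc_seq {T} (P : nat -> T -> Prop) Rl s0 (H0 : P 0%nat s0) Hs (j : nat) : {s : T | P j s} :=
  match j as j0 return {s : T | P j0 s} with
  | O => exist _ s0 H0
  | S j' => let r := dc_step P Rl Hs j' (dc_seq P Rl s0 H0 Hs j') in
            exist _ (proj1_sig r) (proj1 (proj2_sig r))
  end.

Lemma dep_seq {T : Type} (P : nat -> T -> Prop) (Rl : nat -> T -> T -> Prop) s0 :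
  P 0%nat s0 -> (forall j s, P j s -> exists s', P (S j) s' /\ Rl j s s') ->
  exists u : nat -> T, forall j, P j (u j) /\ Rl j (u j) (u (S j)).
Proof.
  intros H0 Hs. exists (fun j => proj1_sig (dc_seq P Rl s0 H0 Hs j)).
  intro j. split; [apply proj2_sig|]. simpl.
  exact (proj2 (proj2_sig (dc_step P Rl Hs j (dc_seq P Rl s0 H0 Hs j)))).
Qed.

Lemma window (m : nat -> nat) (Hm : forall i, (m i < m (S i))%nat) :
  forall J k, (m J <= k)%nat -> exists j, (J <= j)%nat /\ (m j <= k < m (S j))%nat.
Proof.
  assert (Hge : forall i, (i <= m i)%nat).
  { induction i; [lia|]. specialize (Hm i). lia. }
  assert (Hmono : forall a t, (m a <= m (a + t))%nat).
  { intros a t; induction t; [rewrite Nat.add_0_r; lia|].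
    specialize (Hm (a + t)%nat). rewrite Nat.add_succ_r. lia. }
  intros J k HJ.
  assert (Ht : forall t J, (m J <= k)%nat -> (k < m (J + t))%nat ->
    exists j, (J <= j)%nat /\ (m j <= k < m (S j))%nat).
  { induction t as [|t IH]; intros J' H1 H2.
    - rewrite Nat.add_0_r in H2; lia.
    - destruct (Nat.lt_ge_cases k (m (S J'))) as [Hlt|Hge'].
      + exists J'; split; lia.
      + destruct (IH (S J') Hge') as (j & Hj1 & Hj2).
        * replace (S J' + t)%nat with (J' + S t)%nat by lia. exact H2.
        * exists j; split; [lia|exact Hj2]. }
  apply (Ht (S k) J HJ). specialize (Hge (J + S k)%nat). lia.
Qed.

Lemma shadow_tail (X : Type) (d : X -> X -> R) (f g : X -> X) (xs : nat -> X) :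
  is_metric d -> homeomorphism d f g -> shadowing d f g ->
  Un_cv (fun k => d (f (xs k)) (xs (S k))) 0 ->
  forall eps m, 0 < eps -> exists n y, (m <= n)%nat /\
    forall k, (n <= k)%nat -> d (Nat.iter k f y) (xs k) < eps.
Proof.
  intros (Hpos & Hzero & Hsym & Htri) (Hgf & Hfg & _ & _) Hs Hxs eps m He.
  destruct (Hs eps He) as (delta & Hd & Hsh).
  destruct (Hxs delta Hd) as (N1 & HN1).
  set (n := Nat.max m N1).
  set (xs' := fun k : Z => if Z.leb (Z.of_nat n) k then xs (Z.to_nat k)
                         else Nat.iter (Z.to_nat (Z.of_nat n - k)) g (xs n)).
  destruct (Hsh xs') as (y & Hy).
  - intro k. unfold xs'.
    destruct (Z.leb_spec (Z.of_nat n) k); destruct (Z.leb_spec (Z.of_nat n) (k+1)).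
    + replace (Z.to_nat (k+1)) with (S (Z.to_nat k)) by lia.
      assert (Hk : (Z.to_nat k >= N1)%nat) by lia.
      specialize (HN1 _ Hk). unfold Rdist in HN1.
      rewrite Rminus_0_r, Rabs_pos_eq in HN1 by apply Hpos. exact HN1.
    + lia.
    + replace (Z.to_nat (Z.of_nat n - k)) with 1%nat by lia.
      replace (Z.to_nat (k+1)) with n by lia. simpl. rewrite Hfg.
      rewrite (proj2 (Hzero _ _) eq_refl). exact Hd.
    + replace (Z.to_nat (Z.of_nat n - k)) with (S (Z.to_nat (Z.of_nat n - (k + 1)))) by lia.
      simpl. rewrite Hfg. rewrite (proj2 (Hzero _ _) eq_refl). exact Hd.
  - exists n, y. split; [lia|]. intros k Hk. specialize (Hy (Z.of_nat k)).
    rewrite fpow_nat in Hy. unfold xs' in Hy.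
    destruct (Z.leb_spec (Z.of_nat n) (Z.of_nat k)); [|lia].
    rewrite Nat2Z.id in Hy. exact Hy.
Qed.

Theorem mainTheorem8 (X : Type) (d : X -> X -> R) (f g : X -> X) :
  is_metric d -> compact_space d -> homeomorphism d f g ->
  shadowing d f g ->
  (forall eps, 0 < eps -> exists delta, 0 < delta /\
     forall x y, d x y < delta ->
       exists z, Vs_eps d f eps x z /\ Vu_eps d g eps y z) ->
  limit_shadowing d f.
Proof.
  intros Hm Hc Hh Hs Hl xs Hxs.
  pose proof Hm as (Hpos & Hzero & Hsym & Htri).
  pose proof Hh as (Hgf & Hfg & Hfc & Hgc).
  assert (Hdd : forall x, d x x = 0) by (intro x; exact (proj2 (Hzero x x) eq_refl)).
  set (H := fun j : nat => (/2)^j).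
  assert (HHpos : forall j, 0 < H j) by (intro j; apply pow_lt; lra).
  assert (HHS : forall j, H (S j) = H j / 2) by (intro j; unfold H; simpl; field).
  assert (HD : forall j : nat, exists D, 0 < D /\ forall x y, d x y < D ->
     exists z, Vs_eps d f (H j) x z /\ Vu_eps d g (H j) y z) by (intro j; apply Hl; apply HHpos).
  set (D := fun j => proj1_sig (constructive_indefinite_description _ (HD j))).
  assert (HD' : forall j, 0 < D j /\ forall x y, d x y < D j ->
     exists z, Vs_eps d f (H j) x z /\ Vu_eps d g (H j) y z)
    by (intro j; exact (proj2_sig (constructive_indefinite_description _ (HD j)))).
  set (e := fun j => Rmin (H j) (D j / 3)).
  assert (Hepos : forall j, 0 < e j).
  { intro j; unfold e; apply Rmin_pos; [apply HHpos| destruct (HD' j); lra]. }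
  assert (HeH : forall j, e j <= H j) by (intro j; apply Rmin_l).
  assert (HeD : forall j, 3 * e j <= D j).
  { intro j; unfold e. pose proof (Rmin_r (H j) (D j / 3)). lra. }
  set (P := fun (j : nat) (s : nat * X * X) =>
    (forall k, (fst (fst s) <= k)%nat -> d (Nat.iter k f (snd (fst s))) (xs k) < e j) /\
    (forall r, 0 < r -> exists N, forall k, (N <= k)%nat ->
        d (Nat.iter k f (snd s)) (Nat.iter k f (snd (fst s))) < r)).
  set (Rl := fun (j : nat) (s s' : nat * X * X) =>
    (fst (fst s) < fst (fst s'))%nat /\
    (forall k, (k <= fst (fst s'))%nat -> d (Nat.iter k f (snd s')) (Nat.iter k f (snd s)) <= H j) /\
    (forall k, (fst (fst s') <= k)%nat -> d (Nat.iter k f (snd s')) (Nat.iter k f (snd (fst s'))) <= H j)).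
  destruct (shadow_tail X d f g xs Hm Hh Hs Hxs (e 0%nat) 0%nat (Hepos 0%nat)) as (n0 & y0 & _ & Hy0).
  destruct (dep_seq P Rl (n0, y0, y0)) as [u Hu].
  { split; simpl; [exact Hy0|]. intros r Hr; exists 0%nat; intros; rewrite Hdd; exact Hr. }
  { intros j [[n y] z] [HI1 HI2]; simpl in HI1, HI2.
    destruct (HI2 (e j) (Hepos j)) as (N2 & HN2).
    assert (Hmin : 0 < Rmin (e j) (e (S j))) by (apply Rmin_pos; apply Hepos).
    destruct (shadow_tail X d f g xs Hm Hh Hs Hxs _ (Nat.max (S n) N2) Hmin)
      as (n' & y' & Hn' & Hy').
    set (a := Nat.iter n' f z); set (b := Nat.iter n' f y').
    assert (Hab : d b a < D j).
    { pose proof (Hy' n' (le_n _)) as h1. pose proof (HI1 n' ltac:(lia)) as h2.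
      pose proof (HN2 n' ltac:(lia)) as h3. pose proof (Rmin_l (e j) (e (S j))) as h4.
      pose proof (Htri b (xs n') a) as h5. pose proof (Htri (xs n') (Nat.iter n' f y) a) as h6.
      rewrite (Hsym (xs n') (Nat.iter n' f y)) in h6.
      rewrite (Hsym (Nat.iter n' f y) a) in h6.
      pose proof (HeD j) as h7. unfold b, a in *. lra. }
    destruct (proj2 (HD' j) b a Hab) as (w & [Hws Hwse] & [Hwu Hwue]).
    exists (n', y', Nat.iter n' g w). split; [split|split;[|split]]; simpl.
    - intros k Hk. eapply Rlt_le_trans; [apply Hy'; exact Hk| apply Rmin_r].
    - intros r Hr. destruct (Hws r Hr) as (N3 & HN3). exists (N3 + n')%nat. intros k Hk.
      rewrite (iter_ge1 f g Hfg n' k w) by lia.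
      assert (E: Nat.iter k f y' = Nat.iter (k - n') f b)
        by (unfold b; rewrite <- iter_add'; f_equal; lia).
      rewrite E, Hsym. specialize (HN3 (k - n')%nat ltac:(lia)). unfold Rdist in HN3.
      rewrite Rminus_0_r, Rabs_pos_eq in HN3 by apply Hpos. exact HN3.
    - lia.
    - intros k Hk. rewrite (iter_le1 f g Hfg n' k w Hk).
      assert (E: Nat.iter k f z = Nat.iter (n' - k) g a)
        by (unfold a; rewrite (iter_le1 g f Hgf) by lia; f_equal; lia).
      rewrite E, Hsym. apply Hwue.
    - intros k Hk. rewrite (iter_ge1 f g Hfg n' k w) by lia.
      assert (E: Nat.iter k f y' = Nat.iter (k - n') f b)
        by (unfold b; rewrite <- iter_add'; f_equal; lia).
      rewrite E, Hsym. apply Hwse. }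
  set (nn := fun j => fst (fst (u j))). set (yy := fun j => snd (fst (u j))).
  set (zz := fun j => snd (u j)).
  assert (Hmono : forall i, (nn i < nn (S i))%nat) by (intro i; exact (proj1 (proj2 (Hu i)))).
  assert (Hle : forall a t, (nn a <= nn (a + t))%nat).
  { intros a t; induction t; [rewrite Nat.add_0_r; lia|].
    specialize (Hmono (a + t)%nat). rewrite Nat.add_succ_r. lia. }
  assert (Htel : forall a t k, (k <= nn (S a))%nat ->
     d (Nat.iter k f (zz (a + t)%nat)) (Nat.iter k f (zz a)) <= 2 * H a - 2 * H (a + t)%nat).
  { intros a t k Hk. induction t.
    - rewrite Nat.add_0_r, Hdd. lra.
    - rewrite Nat.add_succ_r, HHS.
      pose proof (Htri (Nat.iter k f (zz (S (a + t)))) (Nat.iter k f (zz (a + t)%nat)) (Nat.iter k f (zz a))).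
      assert (Hs1 : d (Nat.iter k f (zz (S (a + t)))) (Nat.iter k f (zz (a + t)%nat)) <= H (a + t)%nat).
      { apply (proj1 (proj2 (proj2 (Hu (a + t)%nat)))).
        pose proof (Hle (S a) t) as h1. replace (S a + t)%nat with (S (a + t)) in h1 by lia.
        unfold nn in *; simpl in *. lia. }
      lra. }
  destruct (cluster X d Hm Hc zz) as [p Hp].
  exists p. intros eps Heps.
  assert (Hh2 : Rabs (/2) < 1) by (rewrite Rabs_pos_eq; lra).
  destruct (pow_lt_1_zero (/2) Hh2 (eps/6) ltac:(lra)) as [J HJ].
  exists (nn (S J)). intros k Hk.
  destruct (window (fun i => nn (S i)) (fun i => Hmono (S i)) J k Hk) as (j & HjJ & Hk1 & Hk2).
  destruct (iter_cont X d f Hfc k p (eps/2) ltac:(lra)) as (rho & Hrho & Hcont).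
  destruct (Hp rho Hrho (S j)) as (m & Hm1 & Hm2).
  pose proof (Hcont _ Hm2) as hA.
  pose proof (Htel (S j) (m - S j)%nat k ltac:(lia)) as hB.
  replace (S j + (m - S j))%nat with m in hB by lia.
  pose proof (HHpos m).
  pose proof (proj2 (proj2 (proj2 (Hu j))) k Hk1) as hC.
  pose proof (proj1 (proj1 (Hu (S j))) k Hk1) as hD.
  pose proof (HeH (S j)). pose proof (HHS j).
  pose proof (HJ j HjJ) as hE. rewrite Rabs_pos_eq in hE by (apply Rlt_le, HHpos).
  change ((/2)^j) with (H j) in hE.
  pose proof (Htri (Nat.iter k f p) (Nat.iter k f (zz m)) (xs k)).
  pose proof (Htri (Nat.iter k f (zz m)) (Nat.iter k f (zz (S j))) (xs k)).
  pose proof (Htri (Nat.iter k f (zz (S j))) (Nat.iter k f (yy (S j))) (xs k)).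
  unfold Rdist. rewrite Rminus_0_r, Rabs_pos_eq by apply Hpos.
  fold zz yy in hC, hD. unfold zz, yy in *. lra.
Qed.
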